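(* Let $u\in W^{k+3,\infty}(\Omega)$ and let $b^{K}_{s,t}$ denote its M-coefficients on $K\in\mathcal T_h$. Then there is a constant $C$ depending only on $k$ and the quasi-uniformity constant $c_1$ such that $$\Big|\frac{b^{K_{i,j}}_{1,k+1}}{h_i^x}-\frac{b^{K_{i+1,j}}_{1,k+1}}{h_{i+1}^x}\Big|\le C h^{k+2}\|u\|_{W^{k+3,\infty}(\Omega)}\quad\forall i\in\{1,\dots,N_x-1\},\ j\in\{1,\dots,N_y\},$$ $$\Big|\frac{b^{K_{i,j}}_{k+1,1}}{h_j^y}-\frac{b^{K_{i,j+1}}_{k+1,1}}{h_{j+1}^y}\Big|\le C h^{k+2}\|u\|_{W^{k+3,\infty}(\Omega)}\quad\forall i\in\{1,\dots,N_x\},\ j\in\{1,\dots,N_y-1\}.$$ (Adjacent elements need not have equal sizes.)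
   Context: $\Omega=(0,1)^2$, $k\ge1$. Mesh: $0=x_0<\dots<x_{N_x}=1$, $0=y_0<\dots<y_{N_y}=1$, $h_i^x=x_i-x_{i-1}$, $h_j^y=y_j-y_{j-1}$, $h=\max_{i,j}\{h_i^x,h_j^y\}$, quasi-uniform: $h/h_i^x\le c_1$, $h/h_j^y\le c_1$. $K_{i,j}=[x_{i-1},x_i]\times[y_{j-1},y_j]$, $F_K:[-1,1]^2\to K$, $x=\frac{h_i^x}{2}\hat x+\frac{x_{i-1}+x_i}{2}$, $y=\frac{h_j^y}{2}\hat y+\frac{y_{j-1}+y_j}{2}$. M-functions and M-decomposition. $L_n$ is the Legendre polynomial of degree $n$ on $[-1,1]$. $\hat M_0=1$, $\hat M_1(\hat x)=\hat x$, $\hat M_n(\hat x)=\int_{-1}^{\hat x}L_{n-1}(t)dt=\frac{1}{2^{n-1}(n-1)!}\frac{d^{n-2}}{d\hat x^{n-2}}(\hat x^2-1)^{n-1}$ for $n\ge2$. On $K$, $M^x_s(x)=\hat M_s(\hat x)$, $M^y_t(y)=\hat M_t(\hat y)$ via $F_K$. For $g$ on $[-1,1]$: $\lambda_0(g)=\frac{g(1)+g(-1)}2$, $\lambda_1(g)=\frac{g(1)-g(-1)}2$, $\lambda_n(g)=\frac{2n-1}{2}\int_{-1}^1 g'(t)L_{n-1}(t)dt$ for $n\ge2$. With $\hat u=u\circ F_K$, the M-coefficients of $u$ on $K$ are $b^K_{s,t}=\lambda_s^{(\hat x)}\lambda_t^{(\hat y)}\hat u$ ($\lambda_s$ acting in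 $\hat x$, $\lambda_t$ in $\hat y$), so that $u|_K=\sum_{s,t\ge0}b^K_{s,t}M^x_sM^y_t$ formally. *)

(* Defs.v *)
From Stdlib Require Import Reals Lra List.
From Coquelicot Require Import Coquelicot.
Open Scope R_scope.

(* Leg_pair n x = (L_n x, L_{n+1} x) *)
Fixpoint Leg_pair (n : nat) (x : R) : R * R :=
  match n with
  | O => (1, x)
  | S m => let p := Leg_pair m x in
           (snd p, ((2 * INR m + 3) * x * snd p - (INR m + 1) * fst p) / (INR m + 2))
  end.
Definition Legendre (n : nat) (x : R) : R := fst (Leg_pair n x).

Definition lam (n : nat) (g : R -> R) : R :=
  match n with
  | O => (g 1 + g (-1)) / 2
  | S O => (g 1 - g (-1)) / 2
  | _ => (2 * INR n - 1) / 2 *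
         RInt (fun t => Derive g t * Legendre (n - 1) t) (-1) 1
  end.

Definition Mcoef (u : R -> R -> R) (xl xr yl yr : R) (s t : nat) : R :=
  lam s (fun xh => lam t (fun yh =>
    u ((xr - xl) / 2 * xh + (xl + xr) / 2) ((yr - yl) / 2 * yh + (yl + yr) / 2))).

Definition is_mesh (N : nat) (xs : nat -> R) : Prop :=
  (1 <= N)%nat /\ xs O = 0 /\ xs N = 1 /\
  (forall i, (1 <= i <= N)%nat -> xs (i - 1)%nat < xs i).

Definition step (xs : nat -> R) (i : nat) : R := xs i - xs (i - 1)%nat.

Fixpoint maxstep (xs : nat -> R) (n : nat) : R :=
  match n with
  | O => 0
  | S m => Rmax (maxstep xs m) (xs (S m) - xs m)
  end.

Definition meshsize (Nx : nat) (xs : nat -> R) (Ny : nat) (ys : nat -> R) : R :=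
  Rmax (maxstep xs Nx) (maxstep ys Ny).

Definition quasi_uniform (c1 : R) (Nx : nat) (xs : nat -> R) (Ny : nat) (ys : nat -> R)
  : Prop :=
  (forall i, (1 <= i <= Nx)%nat -> meshsize Nx xs Ny ys / step xs i <= c1) /\
  (forall j, (1 <= j <= Ny)%nat -> meshsize Nx xs Ny ys / step ys j <= c1).

Definition coefK (u : R -> R -> R) (xs ys : nat -> R) (i j s t : nat) : R :=
  Mcoef u (xs (i - 1)%nat) (xs i) (ys (j - 1)%nat) (ys j) s t.

(* iterated partial derivative along a word: true = d/dx, false = d/dy *)
Fixpoint Dw (w : list bool) (u : R -> R -> R) : R -> R -> R :=
  match w with
  | nil => u
  | b :: w' =>
      let f := Dw w' u in
      if b then (fun x y => Derive (fun t => f t y) x)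
      else (fun x y => Derive (fun t => f x t) y)
  end.

Definition C_m_R2 (m : nat) (u : R -> R -> R) : Prop :=
  (forall w, (length w < m)%nat -> forall x y,
      ex_derive (fun t => Dw w u t y) x /\ ex_derive (fun t => Dw w u x t) y) /\
  (forall w, (length w <= m)%nat -> forall x y,
      continuous (fun p : R * R => Dw w u (fst p) (snd p)) (x, y)).

Definition in_sq (x y : R) : Prop := 0 <= x <= 1 /\ 0 <= y <= 1.

(* M bounds the W^{m+1,infinity}(Omega) norm of u: all derivatives of order <= m
   are bounded by M on the closed square and those of order m are M-Lipschitz
   there (w.r.t. the max-distance). *)
Definition W_bound (m : nat) (u : R -> R -> R) (M : R) : Prop :=
  (forall w, (length w <= m)%nat -> forall x y, in_sq x y -> Rabs (Dw w u x y) <= M) /\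
  (forall w, length w = m -> forall x y x' y', in_sq x y -> in_sq x' y' ->
      Rabs (Dw w u x y - Dw w u x' y') <= M * Rmax (Rabs (x - x')) (Rabs (y - y'))).

(* Main.v *)
Require Import Defs.
From Stdlib Require Import Reals Lra Lia List Arith Wf_nat.
From Coquelicot Require Import Coquelicot.
Open Scope R_scope.
Lemma RInt_lin (f g : R -> R) (a b al be : R) :
  ex_RInt f a b -> ex_RInt g a b ->
  RInt (fun t => al * f t + be * g t) a b = al * RInt f a b + be * RInt g a b.
Proof.
  intros Hf Hg.
  pose proof (ex_RInt_scal (V := R_NormedModule) f a b al Hf) as E1.
  pose proof (ex_RInt_scal (V := R_NormedModule) g a b be Hg) as E2.
  pose proof (RInt_plus (V := R_CompleteNormedModule) _ _ a b E1 E2) as E.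
  pose proof (RInt_scal (V := R_CompleteNormedModule) f a b al Hf) as F1.
  pose proof (RInt_scal (V := R_CompleteNormedModule) g a b be Hg) as F2.
  simpl in E, F1, F2. unfold plus, scal in *; simpl in *. unfold mult in *; simpl in *.
  rewrite E, F1, F2. reflexivity.
Qed.
Lemma ex_RInt_lin (f g : R -> R) (a b al be : R) :
  ex_RInt f a b -> ex_RInt g a b -> ex_RInt (fun t => al * f t + be * g t) a b.
Proof.
  intros Hf Hg.
  pose proof (ex_RInt_scal (V := R_NormedModule) f a b al Hf) as E1.
  pose proof (ex_RInt_scal (V := R_NormedModule) g a b be Hg) as E2.
  exact (ex_RInt_plus (V := R_NormedModule) _ _ a b E1 E2).
Qed.

Lemma RInt_lin3 (f g h : R -> R) (a b al be ga : R) :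
  ex_RInt f a b -> ex_RInt g a b -> ex_RInt h a b ->
  RInt (fun t => al * f t + be * g t + ga * h t) a b
  = al * RInt f a b + be * RInt g a b + ga * RInt h a b.
Proof.
  intros Hf Hg Hh.
  rewrite (RInt_ext (V := R_CompleteNormedModule) _ (fun t => 1 * (al * f t + be * g t) + ga * h t))
    by (intros; simpl; ring).
  rewrite RInt_lin. 2: apply ex_RInt_lin; assumption. 2: assumption.
  rewrite (RInt_lin f g) by assumption. match goal with |- ?x = ?y => change (@eq R x y) end; ring.
Qed.

Lemma RInt_zero (a b : R) : RInt (fun _ => 0) a b = 0.
Proof. rewrite (RInt_const (V := R_CompleteNormedModule)). unfold scal; simpl; unfold mult; simpl. ring. Qed.

Lemma cont_mult (f g : R -> R) x : continuous f x -> continuous g x ->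
  continuous (fun t => f t * g t) x.
Proof. intros; apply (continuous_mult (K := R_AbsRing) f g); assumption. Qed.

Lemma der_cont (f : R -> R) x l : is_derive f x l -> continuous f x.
Proof. intros H; apply (ex_derive_continuous (K := R_AbsRing) (V := R_NormedModule)); exists l; exact H. Qed.

Lemma der_cpt (f : R -> R) x l : is_derive f x l -> continuity_pt f x.
Proof. intros H; apply continuity_pt_filterlim; apply (der_cont f x l H). Qed.

Lemma affine_derive (F : R -> R) al ga t l :
  is_derive F (al * t + ga) l -> is_derive (fun s => F (al * s + ga)) t (al * l).
Proof.
  intros H.
  assert (Hg : is_derive (fun s => al * s + ga) t al).
  { auto_derive; auto; ring. }
  exact (is_derive_comp (K := R_AbsRing) (V := R_NormedModule) F (fun s => al * s + ga) t l al H Hg).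
Qed.

Lemma ex_RInt_cont (f : R -> R) : (forall t, continuous f t) -> ex_RInt f (-1) 1.
Proof. intros H; apply (ex_RInt_continuous (V := R_CompleteNormedModule)); intros; apply H. Qed.
Ltac fixeq := match goal with |- ?x = ?y => change (@eq R x y) end.

Fixpoint LD_pair (n : nat) (x : R) : R * R :=
  match n with
  | O => (0, 1)
  | S m => let p := LD_pair m x in
           (snd p, ((2 * INR m + 3) * (snd (Leg_pair m x) + x * snd p) - (INR m + 1) * fst p) / (INR m + 2))
  end.
Definition LD (n : nat) (x : R) : R := fst (LD_pair n x).

Lemma Leg_rec n x : Legendre (S (S n)) x =
  ((2 * INR n + 3) * x * Legendre (S n) x - (INR n + 1) * Legendre n x) / (INR n + 2).
Proof. reflexivity. Qed.
Lemma LD_rec n x : LD (S (S n)) x =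
  ((2 * INR n + 3) * (Legendre (S n) x + x * LD (S n) x) - (INR n + 1) * LD n x) / (INR n + 2).
Proof. reflexivity. Qed.
Lemma Leg0 x : Legendre 0 x = 1. Proof. reflexivity. Qed.
Lemma Leg1 x : Legendre 1 x = x. Proof. reflexivity. Qed.
Lemma LD0 x : LD 0 x = 0. Proof. reflexivity. Qed.
Lemma LD1 x : LD 1 x = 1. Proof. reflexivity. Qed.

Lemma INR_pos2 n : 0 < INR n + 2.
Proof. pose proof (pos_INR n); lra. Qed.

Lemma Leg_deriv_pair n : forall x,
  is_derive (Legendre n) x (LD n x) /\ is_derive (Legendre (S n)) x (LD (S n) x).
Proof.
  induction n as [|n IH]; intros x.
  - split.
    + rewrite LD0. apply (is_derive_ext (fun _ => 1)). intros; reflexivity.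
      apply (is_derive_const (K := R_AbsRing) (V := R_NormedModule)).
    + rewrite LD1. apply (is_derive_ext (fun t => t)). intros; reflexivity.
      apply (is_derive_id (K := R_AbsRing)).
  - split; [apply IH|].
    assert (H0 := fun t => proj1 (IH t)). assert (H1 := fun t => proj2 (IH t)).
    apply (is_derive_ext (fun t => ((2 * INR n + 3) * t * Legendre (S n) t - (INR n + 1) * Legendre n t) / (INR n + 2))).
    { intros; rewrite Leg_rec; reflexivity. }
    rewrite LD_rec.
    auto_derive.
    + repeat split; try (exists (LD (S n) x); apply H1); try (exists (LD n x); apply H0).
      all: try (pose proof (INR_pos2 n); lra).
    + replace (Derive (fun x0 : R => Legendre (S n) x0) x) with (LD (S n) x)
        by (symmetry; apply is_derive_unique; apply H1).
      replace (Derive (fun x0 : R => Legendre n x0) x) with (LD n x)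
        by (symmetry; apply is_derive_unique; apply H0).
      field. pose proof (INR_pos2 n); lra.
Qed.

Lemma Leg_deriv n x : is_derive (Legendre n) x (LD n x).
Proof. apply Leg_deriv_pair. Qed.

Lemma Leg_cont n x : continuous (Legendre n) x.
Proof. apply (der_cont _ _ _ (Leg_deriv n x)). Qed.

Lemma LD_ident_pair n : forall x,
  (x^2 - 1) * LD (S n) x = (INR n + 1) * (x * Legendre (S n) x - Legendre n x) /\
  (x^2 - 1) * LD (S (S n)) x = (INR (S n) + 1) * (x * Legendre (S (S n)) x - Legendre (S n) x).
Proof.
  induction n as [|n IH]; intros x.
  - split.
    + rewrite LD1, Leg1, Leg0. simpl. ring.
    + rewrite LD_rec, Leg_rec, LD1, LD0, Leg1, Leg0. simpl. field.
  - destruct (IH x) as [T0 T1]. split; [exact T1|].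
    rewrite LD_rec. rewrite (Leg_rec (S n)).
    rewrite S_INR in *.
    rewrite Leg_rec in T1. rewrite LD_rec in T1 |- *. rewrite Leg_rec in *.
    set (L0 := Legendre n x) in *. set (L1 := Legendre (S n) x) in *.
    set (D0 := LD n x) in *. set (D1 := LD (S n) x) in *.
    set (m := INR n) in *.
    assert (Hm : 0 <= m) by apply pos_INR.
    set (D2 := ((2 * m + 3) * (L1 + x * D1) - (m + 1) * D0) / (m + 2)) in *.
    set (L2 := ((2 * m + 3) * x * L1 - (m + 1) * L0) / (m + 2)) in *.
    rewrite !S_INR. fold m.
    assert (E : (x ^ 2 - 1) * (((2 * (m + 1) + 3) * (L2 + x * D2) - (m + 1 + 1) * D1) / (m + 1 + 2))
       = ((2 * (m + 1) + 3) * ((x^2-1) * L2) + (2 * (m+1) + 3) * x * ((x^2-1) * D2)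
          - (m + 1 + 1) * ((x^2-1) * D1)) / (m + 1 + 2)) by (field; lra).
    rewrite E, T1, T0. unfold L2. field. lra.
Qed.

Lemma LD_ident n x :
  (x^2 - 1) * LD (S n) x = (INR n + 1) * (x * Legendre (S n) x - Legendre n x).
Proof. apply LD_ident_pair. Qed.

Lemma Leg_bound_pair n : forall x, -1 <= x <= 1 ->
  Rabs (Legendre n x) <= 3 ^ n /\ Rabs (Legendre (S n) x) <= 3 ^ (S n).
Proof.
  induction n as [|n IH]; intros x Hx.
  - rewrite Leg0, Leg1. simpl. split.
    + rewrite Rabs_R1; lra.
    + apply Rabs_le; lra.
  - destruct (IH x Hx) as [B0 B1]. split; [exact B1|].
    rewrite Leg_rec.
    set (L0 := Legendre n x) in *. set (L1 := Legendre (S n) x) in *.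
    assert (Hm : 0 <= INR n) by apply pos_INR.
    assert (Hp : 0 < 3 ^ n) by (apply pow_lt; lra).
    assert (Hx1 : Rabs x <= 1) by (apply Rabs_le; lra).
    assert (Hxl : Rabs (x * L1) <= 3 ^ S n).
    { rewrite Rabs_mult. replace (3 ^ S n) with (1 * 3 ^ S n) by ring.
      apply Rmult_le_compat; auto using Rabs_pos. }
    unfold Rdiv. rewrite Rabs_mult. rewrite (Rabs_right (/ (INR n + 2))).
    2:{ apply Rle_ge, Rlt_le, Rinv_0_lt_compat; lra. }
    apply (Rmult_le_reg_r (INR n + 2)). lra.
    rewrite Rmult_assoc, Rinv_l by lra. rewrite Rmult_1_r.
    eapply Rle_trans. apply Rabs_triang.
    rewrite Rabs_Ropp, !Rabs_mult.
    rewrite (Rabs_right (2 * INR n + 3)) by lra. rewrite (Rabs_right (INR n + 1)) by lra.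
    rewrite Rabs_mult in Hxl.
    simpl in *. nra.
Qed.

Lemma Leg_bound n x : -1 <= x <= 1 -> Rabs (Legendre n x) <= 3 ^ n.
Proof. intros; apply Leg_bound_pair; auto. Qed.

Lemma cont_lin (f g : R -> R) al be x : continuous f x -> continuous g x ->
  continuous (fun t => al * f t + be * g t) x.
Proof.
  intros Hf Hg.
  apply (continuous_plus (U := R_UniformSpace) (K := R_AbsRing) (V := R_NormedModule)
    (fun t => scal al (f t)) (fun t => scal be (g t)));
  apply (continuous_scal_r (U := R_UniformSpace) (K := R_AbsRing) (V := R_NormedModule)); assumption.
Qed.

Lemma cont_lin3 (f g h : R -> R) al be ga x : continuous f x -> continuous g x -> continuous h x ->
  continuous (fun t => al * f t + be * g t + ga * h t) x.
Proof.
  intros Hf Hg Hh.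
  apply (continuous_ext (fun t => 1 * (al * f t + be * g t) + ga * h t)).
  intros; simpl; fixeq; ring.
  apply cont_lin; auto. apply cont_lin; auto.
Qed.


Lemma pow_cont p t : continuous (fun s => s ^ p) t.
Proof.
  apply (der_cont _ _ (INR p * 1 * t ^ pred p)).
  apply (is_derive_pow (fun s => s) p t 1). apply (is_derive_id (K := R_AbsRing)).
Qed.

Lemma mon_cont p n t : continuous (fun s => s ^ p * Legendre n s) t.
Proof. apply cont_mult. apply pow_cont. apply Leg_cont. Qed.

Definition Imom (n p : nat) : R := RInt (fun t => t ^ p * Legendre n t) (-1) 1.

Lemma mon_int p n : ex_RInt (fun s => s ^ p * Legendre n s) (-1) 1.
Proof. apply ex_RInt_cont. intros; apply mon_cont. Qed.

Lemma mom_rec n p : Imom (S (S n)) p =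
  ((2 * INR n + 3) * Imom (S n) (S p) - (INR n + 1) * Imom n p) / (INR n + 2).
Proof.
  pose proof (INR_pos2 n) as Hn.
  unfold Imom.
  rewrite (RInt_ext (V := R_CompleteNormedModule) _
     (fun t => ((2 * INR n + 3) / (INR n + 2)) * (t ^ (S p) * Legendre (S n) t)
             + (- (INR n + 1) / (INR n + 2)) * (t ^ p * Legendre n t)))
    by (intros; rewrite Leg_rec; simpl; field; lra).
  rewrite RInt_lin by apply mon_int. fixeq. field. lra.
Qed.

Lemma mom_parts n p :
  (INR p + 2 + INR (S n)) * Imom (S n) (S p) - INR p * Imom (S n) (pred p) - INR (S n) * Imom n p = 0.
Proof.
  set (df := fun t => (INR p + 2 + INR (S n)) * (t ^ (S p) * Legendre (S n) t)
     + (- INR p) * (t ^ (pred p) * Legendre (S n) t) + (- INR (S n)) * (t ^ p * Legendre n t)).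
  assert (HD : forall t, is_derive (fun s => s ^ p * ((s ^ 2 - 1) * Legendre (S n) s)) t (df t)).
  { intros t.
    assert (H1 := Leg_deriv (S n) t).
    auto_derive.
    - repeat split. exists (LD (S n) t); exact H1.
    - replace (Derive (fun x0 : R => Legendre (S n) x0) t) with (LD (S n) t)
        by (symmetry; apply is_derive_unique; exact H1).
      pose proof (LD_ident n t) as E.
      unfold df. rewrite S_INR.
      set (D := LD (S n) t) in *. set (L1 := Legendre (S n) t) in *. set (L0 := Legendre n t) in *.
      destruct p as [|p].
      + simpl. simpl in E. fixeq.
        match goal with |- ?A = ?B => assert (HH : A - B = ((t*(t*1)-1)*D - (INR n + 1)*(t*L1 - L0))) end.
        { clear. ring. }
        rewrite E in HH. lra.
      + simpl pred. rewrite S_INR. simpl pow. simpl in E. fixeq.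
        match goal with |- ?A = ?B => assert (HH : A - B = t * t ^ p * ((t*(t*1)-1)*D - (INR n + 1)*(t*L1 - L0))) end.
        { clear. ring. }
        rewrite E in HH. lra. }
  assert (HI := is_RInt_derive (V := R_CompleteNormedModule) _ df (-1) 1 (fun t _ => HD t)).
  assert (HC : forall t, continuous df t).
  { intros t; unfold df. apply cont_lin3; apply mon_cont. }
  specialize (HI (fun t _ => HC t)).
  apply is_RInt_unique in HI.
  unfold df in HI. rewrite RInt_lin3 in HI by apply mon_int.
  match type of HI with _ = ?z => assert (Z : z = 0) by (unfold minus, plus, opp; simpl; ring) end.
  rewrite Z in HI. unfold Imom. fixeq. rewrite <- HI. ring.
Qed.

Lemma Imom_1_0 : Imom 1 0 = 0.
Proof.
  unfold Imom.
  assert (H : is_RInt (fun t => t ^ 0 * Legendre 1 t) (-1) 1 (minus ((fun t => t ^ 2 / 2) 1) ((fun t => t ^ 2 / 2) (-1)))).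
  { apply (is_RInt_derive (V := R_CompleteNormedModule) (fun t => t ^ 2 / 2)).
    - intros x _. rewrite Leg1. auto_derive; auto. simpl. field.
    - intros x _. apply mon_cont. }
  apply (is_RInt_unique (V := R_CompleteNormedModule)) in H. rewrite H. unfold minus, plus, opp; simpl. field.
Qed.

Lemma Imom_2_0 : Imom 2 0 = 0.
Proof.
  unfold Imom.
  assert (H : is_RInt (fun t => t ^ 0 * Legendre 2 t) (-1) 1 (minus ((fun t => (t ^ 3 - t) / 2) 1) ((fun t => (t ^ 3 - t) / 2) (-1)))).
  { apply (is_RInt_derive (V := R_CompleteNormedModule) (fun t => (t ^ 3 - t) / 2)).
    - intros x _. rewrite Leg_rec, Leg1, Leg0. auto_derive; auto. simpl. field.
    - intros x _. apply mon_cont. }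
  apply (is_RInt_unique (V := R_CompleteNormedModule)) in H. rewrite H. unfold minus, plus, opp; simpl. field.
Qed.

Lemma mom_zero : forall N p, (p < N)%nat -> Imom N p = 0.
Proof.
  intros N. induction N as [N IHN] using lt_wf_ind. intros p.
  induction p as [p IHp] using lt_wf_ind. intros Hp.
  destruct p as [|q].
  - destruct N as [|[|[|n]]].
    + lia.
    + apply Imom_1_0.
    + apply Imom_2_0.
    + rewrite mom_rec. rewrite (IHN (S (S n))) by lia. rewrite (IHN (S n)) by lia.
      unfold Rdiv; ring.
  - destruct N as [|n]; [lia|].
    pose proof (mom_parts n q) as E.
    rewrite (IHN n) in E by lia.
    assert (Hz : INR q * Imom (S n) (pred q) = 0).
    { destruct q as [|q']. simpl; ring. simpl pred. rewrite (IHp q') by lia. ring. }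
    rewrite Hz in E.
    assert (Hpos : 0 < INR q + 2 + INR (S n)) by (pose proof (pos_INR q); pose proof (pos_INR (S n)); lra).
    apply (Rmult_eq_reg_l (INR q + 2 + INR (S n))); [|lra]. lra.
Qed.

Fixpoint psum (c : nat -> R) (n : nat) (t : R) : R :=
  match n with
  | O => 0
  | S n' => psum c n' t + c n' * t ^ n'
  end.

Lemma psum_ext c c' n t : (forall m, c m = c' m) -> psum c n t = psum c' n t.
Proof. intros H; induction n; simpl; [reflexivity|]. rewrite IHn, H; reflexivity. Qed.

Lemma psum_at0 c n : psum c (S n) 0 = c 0%nat.
Proof.
  induction n. simpl. ring.
  change (psum c (S (S n)) 0) with (psum c (S n) 0 + c (S n) * 0 ^ (S n)).
  rewrite IHn. simpl. ring.
Qed.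

Lemma psum_derive c n t :
  is_derive (psum c n) t (psum (fun m => INR (S m) * c (S m)) (pred n) t).
Proof.
  induction n as [|n IH].
  - simpl. apply (is_derive_ext (fun _ => 0)). intros; reflexivity.
    apply (is_derive_const (K := R_AbsRing) (V := R_NormedModule)).
  - apply (is_derive_ext (fun s => psum c n s + c n * s ^ n)). intros; reflexivity.
    auto_derive.
    + eexists; exact IH.
    + replace (Derive (fun x : R => psum c n x) t) with (psum (fun m => INR (S m) * c (S m)) (pred n) t)
        by (symmetry; apply is_derive_unique; exact IH).
      destruct n as [|n].
      * simpl. ring.
      * cbn [pred psum]. fixeq. ring.
Qed.

Lemma psum_cont c n t : continuous (psum c n) t.
Proof. apply (der_cont _ _ _ (psum_derive c n t)). Qed.

Lemma approx n : forall (q : nat -> R -> R) K,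
  (forall m t, (m < n)%nat -> is_derive (q m) t (q (S m) t)) ->
  (forall t, -1 <= t <= 1 -> Rabs (q n t) <= K) ->
  exists c, forall t, -1 <= t <= 1 -> Rabs (q 0%nat t - psum c n t) <= K.
Proof.
  induction n as [|n IH]; intros q K Hd Hb.
  - exists (fun _ => 0). intros t Ht. simpl. rewrite Rminus_0_r. apply Hb; auto.
  - destruct (IH (fun m => q (S m)) K) as [c' Hc'].
    { intros m t Hm. apply Hd. lia. }
    { exact Hb. }
    set (c := fun m => match m with O => q 0%nat 0 | S m' => c' m' / INR (S m') end).
    exists c. intros t Ht.
    set (Rf := fun s => q 0%nat s - psum c (S n) s).
    assert (HR : forall s, is_derive Rf s (q 1%nat s - psum c' n s)).
    { intros s. unfold Rf. apply (is_derive_minus (K := R_AbsRing) (V := R_NormedModule)).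
      apply Hd; lia.
      replace (psum c' n s) with (psum (fun m => INR (S m) * c (S m)) (pred (S n)) s).
      apply psum_derive.
      simpl pred. apply psum_ext. intros m. unfold c. field. pose proof (pos_INR (S m)).
      rewrite S_INR; pose proof (pos_INR m); lra. }
    destruct (MVT_gen Rf 0 t (fun s => q 1%nat s - psum c' n s)) as [xi [Hxi Heq]].
    { intros x _. apply HR. }
    { intros x _. apply (der_cpt _ _ _ (HR x)). }
    assert (R0 : Rf 0 = 0). { unfold Rf. rewrite psum_at0. unfold c. ring. }
    change (Rabs (Rf t) <= K).
    replace (Rf t) with ((q 1%nat xi - psum c' n xi) * (t - 0)) by lra.
    assert (Hxi' : -1 <= xi <= 1).
    { destruct Hxi as [H1 H2]. split.
      - eapply Rle_trans; [|exact H1]. apply Rmin_case; lra.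
      - eapply Rle_trans; [exact H2|]. apply Rmax_case; lra. }
    specialize (Hc' xi Hxi').
    rewrite Rabs_mult.
    assert (Ht1 : Rabs (t - 0) <= 1) by (apply Rabs_le; lra).
    pose proof (Rabs_pos (q 1%nat xi - psum c' n xi)).
    pose proof (Rabs_pos (t - 0)). nra.
Qed.

Lemma psum_orth c n k : (n <= k)%nat ->
  RInt (fun t => psum c n t * Legendre k t) (-1) 1 = 0.
Proof.
  induction n as [|n IH]; intros Hn.
  - simpl. rewrite (RInt_ext (V := R_CompleteNormedModule) _ (fun _ => 0)) by (intros; simpl; ring).
    apply RInt_zero.
  - rewrite (RInt_ext (V := R_CompleteNormedModule) _
       (fun t => 1 * (psum c n t * Legendre k t) + c n * (t ^ n * Legendre k t)))
      by (intros; simpl; ring).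
    rewrite RInt_lin.
    + rewrite IH by lia. pose proof (mom_zero k n) as Z. unfold Imom in Z. rewrite Z by lia. fixeq; ring.
    + apply ex_RInt_cont. intros; apply cont_mult. apply psum_cont. apply Leg_cont.
    + apply mon_int.
Qed.

Lemma OB k (q : nat -> R -> R) K : (1 <= k)%nat ->
  (forall m t, (m < k)%nat -> is_derive (q m) t (q (S m) t)) ->
  (forall t, -1 <= t <= 1 -> Rabs (q k t) <= K) ->
  Rabs (RInt (fun t => q 0%nat t * Legendre k t) (-1) 1) <= 2 * K * 3 ^ k.
Proof.
  intros Hk Hd Hb.
  destruct (approx k q K Hd Hb) as [c Hc].
  assert (Hq0 : forall t, continuous (q 0%nat) t).
  { intros t. apply (der_cont _ _ _ (Hd 0%nat t ltac:(lia))). }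
  assert (I1 : ex_RInt (fun t => (q 0%nat t - psum c k t) * Legendre k t) (-1) 1).
  { apply ex_RInt_cont. intros t. apply cont_mult; [|apply Leg_cont].
    apply (continuous_ext (fun s => 1 * q 0%nat s + (-1) * psum c k s)).
    intros; simpl; fixeq; ring. apply cont_lin. apply Hq0. apply psum_cont. }
  assert (I2 : ex_RInt (fun t => psum c k t * Legendre k t) (-1) 1).
  { apply ex_RInt_cont. intros t. apply cont_mult. apply psum_cont. apply Leg_cont. }
  rewrite (RInt_ext (V := R_CompleteNormedModule) _
     (fun t => 1 * ((q 0%nat t - psum c k t) * Legendre k t) + 1 * (psum c k t * Legendre k t)))
    by (intros; simpl; ring).
  rewrite RInt_lin by assumption.
  rewrite psum_orth by lia.
  rewrite Rmult_0_r, Rplus_0_r, Rmult_1_l.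
  replace (2 * K * 3 ^ k) with ((1 - -1) * (K * 3 ^ k)) by ring.
  apply abs_RInt_le_const. lra. exact I1.
  intros t Ht. rewrite Rabs_mult. apply Rmult_le_compat; try apply Rabs_pos.
  apply Hc; exact Ht. apply Leg_bound; exact Ht.
Qed.

Lemma RInt_scalR (f : R -> R) (a b al : R) :
  ex_RInt f a b -> RInt (fun t => al * f t) a b = al * RInt f a b.
Proof.
  intros Hf. pose proof (RInt_scal (V := R_CompleteNormedModule) f a b al Hf) as F1.
  simpl in F1. unfold scal in F1; simpl in F1. unfold mult in F1; simpl in F1. exact F1.
Qed.

Lemma is_derive_plusR (f g : R -> R) x df dg :
  is_derive f x df -> is_derive g x dg -> is_derive (fun t => f t + g t) x (df + dg).
Proof. intros; apply (is_derive_plus (K := R_AbsRing) (V := R_NormedModule)); assumption. Qed.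

Lemma comb_derive (F F' : R -> R -> R) z1 z2 z3 w1 w2 w3 be ga C t :
  (forall z y, is_derive (fun s => F z s) y (F' z y)) ->
  is_derive (fun s => C * (w1 * F z1 (be * s + ga) + w2 * F z2 (be * s + ga) + w3 * F z3 (be * s + ga))) t
            (C * be * (w1 * F' z1 (be * t + ga) + w2 * F' z2 (be * t + ga) + w3 * F' z3 (be * t + ga))).
Proof.
  intros HF.
  replace (C * be * (w1 * F' z1 (be * t + ga) + w2 * F' z2 (be * t + ga) + w3 * F' z3 (be * t + ga)))
    with (C * (w1 * (be * F' z1 (be * t + ga)) + w2 * (be * F' z2 (be * t + ga)) + w3 * (be * F' z3 (be * t + ga))))
    by ring.
  apply is_derive_scal. apply is_derive_plusR. apply is_derive_plusR.
  all: apply is_derive_scal; apply (affine_derive (fun s => F _ s)); apply HF.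
Qed.

Lemma core (k : nat) (d : nat -> R -> R -> R) (e : R -> R -> R) (M h a b c yl yr : R) :
  (1 <= k)%nat ->
  (forall m x y, (m <= S k)%nat -> is_derive (fun s => d m x s) y (d (S m) x y)) ->
  (forall x y, is_derive (fun s => d (S k) s y) x (e x y)) ->
  (forall x x' y, 0 <= x <= 1 -> 0 <= x' <= 1 -> 0 <= y <= 1 ->
       Rabs (e x y - e x' y) <= M * Rabs (x - x')) ->
  0 <= M -> 0 <= a -> a < b -> b < c -> c <= 1 -> 0 <= yl -> yl < yr -> yr <= 1 ->
  b - a <= h -> c - b <= h -> yr - yl <= h ->
  Rabs ((lam (S k) (fun yh => d 0%nat b ((yr - yl) / 2 * yh + (yl + yr) / 2))
         - lam (S k) (fun yh => d 0%nat a ((yr - yl) / 2 * yh + (yl + yr) / 2))) / 2 / (b - a)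
      - (lam (S k) (fun yh => d 0%nat c ((yr - yl) / 2 * yh + (yl + yr) / 2))
         - lam (S k) (fun yh => d 0%nat b ((yr - yl) / 2 * yh + (yl + yr) / 2))) / 2 / (c - b))
  <= INR (2 * k + 1) * 3 ^ k * h ^ (k + 2) * M.
Proof.
  intros Hk Hd He HL HM Ha Hab Hbc Hc Hyl Hy Hyr Hh1 Hh2 Hh3.
  destruct k as [|k0]; [lia|].
  set (be := (yr - yl) / 2). set (ga := (yl + yr) / 2).
  assert (Hbe : 0 < be) by (unfold be; lra).
  assert (Hbeh : be <= h) by (unfold be; lra).
  assert (Hcont : forall m x t, (m <= S (S k0))%nat -> continuous (fun s => d m x (be * s + ga)) t).
  { intros m x t Hm. apply (der_cont _ _ _ (affine_derive (fun s => d m x s) be ga t _ (Hd m x _ Hm))). }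
  set (J := fun x => RInt (fun t => d 1%nat x (be * t + ga) * Legendre (S k0) t) (-1) 1).
  assert (HJi : forall x, ex_RInt (fun t => d 1%nat x (be * t + ga) * Legendre (S k0) t) (-1) 1).
  { intros x. apply ex_RInt_cont. intros t. apply cont_mult. apply Hcont; lia. apply Leg_cont. }
  set (cst := (2 * INR (S (S k0)) - 1) / 2).
  assert (HG : forall x, lam (S (S k0)) (fun yh => d 0%nat x (be * yh + ga)) = cst * (be * J x)).
  { intros x. unfold lam. replace (S (S k0) - 1)%nat with (S k0) by lia. fold cst. f_equal.
    unfold J. rewrite <- RInt_scalR by apply HJi.
    apply (RInt_ext (V := R_CompleteNormedModule)). intros t _.
    replace (Derive (fun yh : R => d 0%nat x (be * yh + ga)) t) with (be * d 1%nat x (be * t + ga)).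
    simpl; fixeq; ring. symmetry. apply is_derive_unique.
    apply (affine_derive (fun s => d 0%nat x s)). apply Hd. lia. }
  rewrite !HG.
  set (w1 := 1 / (b - a) + 1 / (c - b)). set (w2 := - 1 / (b - a)). set (w3 := - 1 / (c - b)).
  set (q := fun m t => be ^ (S m) * (w1 * d (S m) b (be * t + ga) + w2 * d (S m) a (be * t + ga)
                                    + w3 * d (S m) c (be * t + ga))).
  assert (Hch : forall m t, (m < S k0)%nat -> is_derive (q m) t (q (S m) t)).
  { intros m t Hm. unfold q.
    replace (be ^ S (S m) * (w1 * d (S (S m)) b (be * t + ga) + w2 * d (S (S m)) a (be * t + ga)
                                    + w3 * d (S (S m)) c (be * t + ga)))
      with (be ^ S m * be * (w1 * d (S (S m)) b (be * t + ga) + w2 * d (S (S m)) a (be * t + ga)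
                                    + w3 * d (S (S m)) c (be * t + ga))) by (simpl; ring).
    apply (comb_derive (d (S m)) (d (S (S m)))).
    intros z y. apply Hd. lia. }
  set (K0 := 2 * M * h ^ (S k0 + 2)).
  assert (Hb : forall t, -1 <= t <= 1 -> Rabs (q (S k0) t) <= K0).
  { intros t Ht. set (y := be * t + ga).
    assert (Hy01 : 0 <= y <= 1) by (unfold y, be, ga; split; nra).
    destruct (MVT_gen (fun z => d (S (S k0)) z y) a b (fun z => e z y)) as [x1 [Hx1 E1]].
    { intros; apply He. }
    { intros x _. apply (der_cpt _ _ _ (He x y)). }
    destruct (MVT_gen (fun z => d (S (S k0)) z y) b c (fun z => e z y)) as [x2 [Hx2 E2]].
    { intros; apply He. }
    { intros x _. apply (der_cpt _ _ _ (He x y)). }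
    rewrite Rmin_left in Hx1, Hx2 by lra. rewrite Rmax_right in Hx1, Hx2 by lra.
    unfold q. fold y.
    assert (Hcomb : w1 * d (S (S k0)) b y + w2 * d (S (S k0)) a y + w3 * d (S (S k0)) c y = e x1 y - e x2 y).
    { replace (w1 * d (S (S k0)) b y + w2 * d (S (S k0)) a y + w3 * d (S (S k0)) c y)
        with ((d (S (S k0)) b y - d (S (S k0)) a y) / (b - a) - (d (S (S k0)) c y - d (S (S k0)) b y) / (c - b))
        by (unfold w1, w2, w3; field; lra).
      rewrite E1, E2. field; lra. }
    rewrite Hcomb. rewrite Rabs_mult.
    assert (HL1 : Rabs (e x1 y - e x2 y) <= M * (2 * h)).
    { eapply Rle_trans. apply HL; try lra; auto.
      apply Rmult_le_compat_l; auto. rewrite Rabs_left1 by lra. lra. }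
    assert (Hp : Rabs (be ^ S (S k0)) <= h ^ S (S k0)).
    { rewrite <- RPow_abs. rewrite Rabs_right by lra. apply pow_incr. lra. }
    unfold K0. replace (S k0 + 2)%nat with (S (S (S k0))) by lia.
    replace (2 * M * h ^ S (S (S k0))) with (h ^ S (S k0) * (M * (2 * h))) by (simpl; ring).
    apply Rmult_le_compat; auto using Rabs_pos. }
  pose proof (OB (S k0) q K0 Hk Hch Hb) as HOB.
  assert (Hrel : RInt (fun t => q 0%nat t * Legendre (S k0) t) (-1) 1 = be * (w1 * J b + w2 * J a + w3 * J c)).
  { rewrite (RInt_ext (V := R_CompleteNormedModule) _
       (fun t => (be * w1) * (d 1%nat b (be * t + ga) * Legendre (S k0) t)
               + (be * w2) * (d 1%nat a (be * t + ga) * Legendre (S k0) t)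
               + (be * w3) * (d 1%nat c (be * t + ga) * Legendre (S k0) t)))
      by (intros; unfold q; simpl; ring).
    rewrite RInt_lin3 by apply HJi. unfold J. fixeq. ring. }
  replace ((cst * (be * J b) - cst * (be * J a)) / 2 / (b - a) - (cst * (be * J c) - cst * (be * J b)) / 2 / (c - b))
    with (cst / 2 * RInt (fun t => q 0%nat t * Legendre (S k0) t) (-1) 1)
    by (rewrite Hrel; unfold w1, w2, w3; field; lra).
  assert (Hcst : cst = (2 * INR (S k0) + 1) / 2) by (unfold cst; rewrite (S_INR (S k0)); field).
  rewrite Rabs_mult. rewrite (Rabs_right (cst / 2)) by (rewrite Hcst; pose proof (pos_INR (S k0)); lra).
  replace (INR (2 * S k0 + 1) * 3 ^ S k0 * h ^ (S k0 + 2) * M) with (cst / 2 * (2 * K0 * 3 ^ S k0)).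
  2:{ unfold K0. rewrite Hcst. rewrite plus_INR, mult_INR. simpl (INR 1). simpl (INR 2). field. }
  apply Rmult_le_compat_l. rewrite Hcst; pose proof (pos_INR (S k0)); lra.
  exact HOB.
Qed.

Lemma lam1 g : lam 1 g = (g 1 - g (-1)) / 2.
Proof. reflexivity. Qed.

Lemma lam_ext n f g : (forall x, f x = g x) -> lam n f = lam n g.
Proof.
  intros H. destruct n as [|[|n]].
  - simpl. rewrite !H. reflexivity.
  - simpl. rewrite !H. reflexivity.
  - unfold lam. f_equal. apply (RInt_ext (V := R_CompleteNormedModule)). intros t _.
    f_equal. apply Derive_ext. exact H.
Qed.

Lemma lam_comm m (f g f' g' : R -> R) :
  (forall t, is_derive f t (f' t)) -> (forall t, is_derive g t (g' t)) ->
  (forall t, continuous f' t) -> (forall t, continuous g' t) ->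
  lam (S (S m)) (fun x => (f x - g x) / 2) = (lam (S (S m)) f - lam (S (S m)) g) / 2.
Proof.
  intros Hf Hg Cf Cg. unfold lam.
  assert (I1 : ex_RInt (fun t => f' t * Legendre (S (S m) - 1) t) (-1) 1).
  { apply ex_RInt_cont. intros; apply cont_mult; auto. apply Leg_cont. }
  assert (I2 : ex_RInt (fun t => g' t * Legendre (S (S m) - 1) t) (-1) 1).
  { apply ex_RInt_cont. intros; apply cont_mult; auto. apply Leg_cont. }
  rewrite (RInt_ext (V := R_CompleteNormedModule) (fun t => Derive (fun x => (f x - g x) / 2) t * _)
     (fun t => (1/2) * (f' t * Legendre (S (S m) - 1) t) + (-1/2) * (g' t * Legendre (S (S m) - 1) t))).
  2:{ intros t _. replace (Derive (fun x : R => (f x - g x) / 2) t) with ((f' t - g' t) / 2).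
      simpl; fixeq; field. symmetry. apply is_derive_unique. auto_derive.
      - split; [eexists; apply Hf|]. split; [eexists; apply Hg|]. auto.
      - replace (Derive (fun x : R => f x) t) with (f' t) by (symmetry; apply is_derive_unique; apply Hf).
        replace (Derive (fun x : R => g x) t) with (g' t) by (symmetry; apply is_derive_unique; apply Hg).
        fixeq; field. }
  rewrite (RInt_ext (V := R_CompleteNormedModule) (fun t => Derive f t * _) (fun t => f' t * Legendre (S (S m) - 1) t)).
  2:{ intros t _. rewrite (is_derive_unique _ _ _ (Hf t)). reflexivity. }
  rewrite (RInt_ext (V := R_CompleteNormedModule) (fun t => Derive g t * _) (fun t => g' t * Legendre (S (S m) - 1) t)).
  2:{ intros t _. rewrite (is_derive_unique _ _ _ (Hg t)). reflexivity. }
  rewrite RInt_lin by assumption. fixeq. field.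
Qed.

Lemma mesh_mono N xs : is_mesh N xs -> forall i j, (i <= j <= N)%nat -> xs i <= xs j.
Proof.
  intros [_ [_ [_ Hs]]] i j. induction j as [|j IH]; intros Hij.
  - replace i with 0%nat by lia. lra.
  - destruct (Nat.eq_dec i (S j)) as [->|Hne]. lra.
    eapply Rle_trans. apply IH; lia.
    pose proof (Hs (S j) ltac:(lia)) as H. replace (S j - 1)%nat with j in H by lia. lra.
Qed.

Lemma mesh01 N xs i : is_mesh N xs -> (i <= N)%nat -> 0 <= xs i <= 1.
Proof.
  intros Hm Hi. pose proof Hm as [_ [H0 [H1 _]]]. split.
  - rewrite <- H0. apply (mesh_mono N xs Hm); lia.
  - rewrite <- H1. apply (mesh_mono N xs Hm); lia.
Qed.

Lemma mesh_lt N xs i : is_mesh N xs -> (1 <= i <= N)%nat -> xs (i - 1)%nat < xs i.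
Proof. intros [_ [_ [_ Hs]]] Hi. apply Hs; exact Hi. Qed.

Lemma maxstep_ge xs N i : (1 <= i <= N)%nat -> step xs i <= maxstep xs N.
Proof.
  induction N as [|N IH]; intros Hi. lia.
  simpl. destruct (Nat.eq_dec i (S N)) as [->|Hne].
  - unfold step. replace (S N - 1)%nat with N by lia. apply Rmax_r.
  - eapply Rle_trans. apply IH; lia. apply Rmax_l.
Qed.

Lemma stepx_le Nx xs Ny ys i : (1 <= i <= Nx)%nat -> step xs i <= meshsize Nx xs Ny ys.
Proof. intros; eapply Rle_trans. apply maxstep_ge; eauto. apply Rmax_l. Qed.
Lemma stepy_le Nx xs Ny ys j : (1 <= j <= Ny)%nat -> step ys j <= meshsize Nx xs Ny ys.
Proof. intros; eapply Rle_trans. apply maxstep_ge; eauto. apply Rmax_r. Qed.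

Lemma repeat_len (b : bool) m : length (repeat b m) = m.
Proof. induction m; simpl; auto. Qed.

Theorem mainTheorem3 :
  forall (k : nat), (1 <= k)%nat -> forall c1 : R,
  exists C : R,
  forall (Nx : nat) (xs : nat -> R) (Ny : nat) (ys : nat -> R),
    is_mesh Nx xs -> is_mesh Ny ys -> quasi_uniform c1 Nx xs Ny ys ->
  forall u : R -> R -> R, C_m_R2 (k + 2) u ->
  forall M : R, W_bound (k + 2) u M ->
    (forall i j, (1 <= i <= Nx - 1)%nat -> (1 <= j <= Ny)%nat ->
       Rabs (coefK u xs ys i j 1 (k + 1) / step xs i
             - coefK u xs ys (i + 1) j 1 (k + 1) / step xs (i + 1))
       <= C * meshsize Nx xs Ny ys ^ (k + 2) * M) /\
    (forall i j, (1 <= i <= Nx)%nat -> (1 <= j <= Ny - 1)%nat ->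
       Rabs (coefK u xs ys i j (k + 1) 1 / step ys j
             - coefK u xs ys i (j + 1) (k + 1) 1 / step ys (j + 1))
       <= C * meshsize Nx xs Ny ys ^ (k + 2) * M).
Proof.
  intros k Hk c1. exists (INR (2 * k + 1) * 3 ^ k).
  intros Nx xs Ny ys Hx Hy _ u [Hu _] M [HW1 HW2].
  assert (HM : 0 <= M).
  { assert (H := HW1 nil ltac:(simpl; lia) 0 0 ltac:(unfold in_sq; lra)).
    pose proof (Rabs_pos (Dw nil u 0 0)). lra. }
  set (h := meshsize Nx xs Ny ys).
  split.
  - intros i j Hi Hj.
    set (B := fun yh => (ys j - ys (j - 1)%nat) / 2 * yh + (ys (j - 1)%nat + ys j) / 2).
    assert (Hc : forall i', coefK u xs ys i' j 1 (k + 1) =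
       (lam (S k) (fun yh => u (xs i') (B yh)) - lam (S k) (fun yh => u (xs (i' - 1)%nat) (B yh))) / 2).
    { intros i'. unfold coefK, Mcoef. rewrite lam1. cbv beta.
      replace (k + 1)%nat with (S k) by lia.
      replace ((xs i' - xs (i' - 1)%nat) / 2 * 1 + (xs (i' - 1)%nat + xs i') / 2) with (xs i') by field.
      replace ((xs i' - xs (i' - 1)%nat) / 2 * (-1) + (xs (i' - 1)%nat + xs i') / 2) with (xs (i' - 1)%nat) by field.
      reflexivity. }
    rewrite !Hc. unfold step. replace (i + 1 - 1)%nat with i by lia.
    unfold B.
    pose proof (mesh_lt Nx xs i Hx ltac:(lia)).
    pose proof (mesh_lt Nx xs (i + 1) Hx ltac:(lia)) as Hlt. replace (i + 1 - 1)%nat with i in Hlt by lia.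
    pose proof (mesh_lt Ny ys j Hy ltac:(lia)).
    pose proof (mesh01 Nx xs (i - 1) Hx ltac:(lia)).
    pose proof (mesh01 Nx xs (i + 1) Hx ltac:(lia)).
    pose proof (mesh01 Ny ys (j - 1) Hy ltac:(lia)).
    pose proof (mesh01 Ny ys j Hy ltac:(lia)).
    pose proof (stepx_le Nx xs Ny ys i ltac:(lia)) as S1.
    pose proof (stepx_le Nx xs Ny ys (i + 1) ltac:(lia)) as S2.
    pose proof (stepy_le Nx xs Ny ys j ltac:(lia)) as S3.
    unfold step in S1, S2, S3. replace (i + 1 - 1)%nat with i in S2 by lia. fold h in S1, S2, S3.
    apply (core k (fun m x y => Dw (repeat false m) u x y) (fun x y => Dw (true :: repeat false (S k)) u x y)
             M h (xs (i - 1)%nat) (xs i) (xs (i + 1)%nat) (ys (j - 1)%nat) (ys j)); try lra; auto.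
    + intros m x y Hm. simpl. apply Derive_correct.
      apply (Hu (repeat false m) ltac:(rewrite repeat_len; lia) x y).
    + intros x y. simpl. apply Derive_correct.
      apply (Hu (repeat false (S k)) ltac:(rewrite repeat_len; lia) x y).
    + intros x x' y Hx1 Hx2 Hy1.
      assert (HH := HW2 (true :: repeat false (S k)) ltac:(simpl; rewrite repeat_len; lia) x y x' y
                    ltac:(split; auto) ltac:(split; auto)).
      replace (y - y) with 0 in HH by ring. rewrite Rabs_R0 in HH.
      rewrite Rmax_left in HH by apply Rabs_pos. exact HH.
  - intros i j Hi Hj.
    set (A := fun xh => (xs i - xs (i - 1)%nat) / 2 * xh + (xs (i - 1)%nat + xs i) / 2).
    assert (Hc : forall j', coefK u xs ys i j' (k + 1) 1 =
       (lam (S k) (fun xh => u (A xh) (ys j')) - lam (S k) (fun xh => u (A xh) (ys (j' - 1)%nat))) / 2).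
    { intros j'. unfold coefK, Mcoef. replace (k + 1)%nat with (S k) by lia.
      rewrite (lam_ext _ _ (fun xh => (u (A xh) (ys j') - u (A xh) (ys (j' - 1)%nat)) / 2)).
      2:{ intros x. rewrite lam1. unfold A.
          replace ((ys j' - ys (j' - 1)%nat) / 2 * 1 + (ys (j' - 1)%nat + ys j') / 2) with (ys j') by field.
          replace ((ys j' - ys (j' - 1)%nat) / 2 * (-1) + (ys (j' - 1)%nat + ys j') / 2) with (ys (j' - 1)%nat) by field.
          reflexivity. }
      destruct k as [|k0]; [lia|].
      set (al := (xs i - xs (i - 1)%nat) / 2).
      assert (HD : forall y t, is_derive (fun xh => u (A xh) y) t (al * Dw (true :: nil) u (A t) y)).
      { intros y t. unfold A. apply (affine_derive (fun s => u s y)). simpl. apply Derive_correct.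
        apply (Hu nil ltac:(simpl; lia) _ y). }
      assert (HC : forall y t, continuous (fun t => al * Dw (true :: nil) u (A t) y) t).
      { intros y t. apply (der_cont _ _ (al * (al * Dw (true :: true :: nil) u (A t) y))).
        apply is_derive_scal. unfold A. apply (affine_derive (fun s => Dw (true :: nil) u s y)).
        simpl Dw at 2. apply Derive_correct. apply (Hu (true :: nil) ltac:(simpl; lia) _ y). }
      apply lam_comm with (f' := fun t => al * Dw (true :: nil) u (A t) (ys j'))
                          (g' := fun t => al * Dw (true :: nil) u (A t) (ys (j' - 1)%nat)); auto. }
    rewrite !Hc. unfold step. replace (j + 1 - 1)%nat with j by lia.
    unfold A.
    pose proof (mesh_lt Ny ys j Hy ltac:(lia)).
    pose proof (mesh_lt Ny ys (j + 1) Hy ltac:(lia)) as Hlt. replace (j + 1 - 1)%nat with j in Hlt by lia.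
    pose proof (mesh_lt Nx xs i Hx ltac:(lia)).
    pose proof (mesh01 Ny ys (j - 1) Hy ltac:(lia)).
    pose proof (mesh01 Ny ys (j + 1) Hy ltac:(lia)).
    pose proof (mesh01 Nx xs (i - 1) Hx ltac:(lia)).
    pose proof (mesh01 Nx xs i Hx ltac:(lia)).
    pose proof (stepy_le Nx xs Ny ys j ltac:(lia)) as S1.
    pose proof (stepy_le Nx xs Ny ys (j + 1) ltac:(lia)) as S2.
    pose proof (stepx_le Nx xs Ny ys i ltac:(lia)) as S3.
    unfold step in S1, S2, S3. replace (j + 1 - 1)%nat with j in S2 by lia. fold h in S1, S2, S3.
    apply (core k (fun m y x => Dw (repeat true m) u x y) (fun y x => Dw (false :: repeat true (S k)) u x y)
             M h (ys (j - 1)%nat) (ys j) (ys (j + 1)%nat) (xs (i - 1)%nat) (xs i)); try lra; auto.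
    + intros m y x Hm. simpl. apply Derive_correct.
      apply (Hu (repeat true m) ltac:(rewrite repeat_len; lia) x y).
    + intros y x. simpl. apply Derive_correct.
      apply (Hu (repeat true (S k)) ltac:(rewrite repeat_len; lia) x y).
    + intros y y' x Hy1 Hy2 Hx1.
      assert (HH := HW2 (false :: repeat true (S k)) ltac:(simpl; rewrite repeat_len; lia) x y x y'
                    ltac:(split; auto) ltac:(split; auto)).
      replace (x - x) with 0 in HH by ring. rewrite Rabs_R0 in HH.
      rewrite Rmax_right in HH by apply Rabs_pos. exact HH.
Qed.
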